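(* Let $t$ be transcendental over $\mathbb{Q}$ and work over the field $\mathbb{Q}(t)$. There exist $a(t),b(t),c(t)\in\mathbb{Q}(t)$ such that the curve $E_t: y^2=a(t)x^4+b(t)x^2+c(t)$ is an elliptic curve over $\mathbb{Q}(t)$ and, for each $i\in\{\pm\tfrac12,\pm\tfrac32,\pm\tfrac52\}$, the curve $E_t$ has a $\mathbb{Q}(t)$-rational point with $x$-coordinate $(t+i)^2$. Consequently, there are infinitely many elliptic curves over $\mathbb{Q}$ of the form $y^2=ax^4+bx^2+c$ with $a,b,c\in\mathbb{Q}$ possessing a $6$-term sequence of consecutive squares.
   Context: Let $C$ be an elliptic curve over a field $K$ given by $y^2=P(x)$ with $P\in K[x]$ of degree $3$ or $4$. A sequence of points $(x_i,y_i)\in C(K)$, $i=1,2,\dots,n$, is a sequence of consecutive squares (of length $n$) if there is $u\in K$ with $x_i=(u+i)^2$ for $i=1,\dots,n$. The six values $(t+i)^2$, $i\in\{\pm\tfrac12,\pm\tfrac32,\pm\tfrac52\}$, are consecutive squares in this sense (take $u=t-\tfrac72$). *)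

(* Defs.v *)
From HB Require Import structures.
From mathcomp Require Import all_boot all_order all_algebra all_field.
Set Implicit Arguments. Unset Strict Implicit. Unset Printing Implicit Defensive.
Import Order.TTheory GRing.Theory Num.Theory.
Local Open Scope ring_scope.

(* The rational function field Q(t), t transcendental = the indeterminate. *)
Definition Qt : fieldType := {fraction {poly rat}}.
Definition tvar : Qt := @FracField.tofrac _ ('X : {poly rat}).

Definition quartic (K : fieldType) (a b c : K) : {poly K} :=
  a *: 'X^4 + b *: 'X^2 + c%:P.

(* y^2 = P(x) is an elliptic curve (context: P of degree 3 or 4, no repeated
   roots over an algebraic closure, i.e. P separable). *)
Definition elliptic_poly (K : fieldType) (P : {poly K}) : bool :=
  ((size P == 4)%N || (size P == 5)%N) && separable_poly P.

Definition on_curve (K : fieldType) (P : {poly K}) (x y : K) : Prop :=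
  y ^+ 2 = P.[x].

Definition has_consec_squares (K : fieldType) (P : {poly K}) (n : nat) : Prop :=
  exists u : K, forall i : nat, (1 <= i <= n)%N ->
    exists y : K, on_curve P ((u + i%:R) ^+ 2) y.

(* Main.v *)
Require Import Defs.
From HB Require Import structures.
From mathcomp Require Import all_boot all_order all_algebra all_field.
From mathcomp Require Import ring lra.
Import Order.TTheory GRing.Theory Num.Theory.
Local Open Scope ring_scope.

Fixpoint numr {R : comRingType} (ds : seq nat) : R :=
  match ds with [::] => 0 | d :: ds' => d%:R + 1000%:R * numr ds' end.
Definition zc {R : comRingType} (c : bool * seq nat) : R :=
  if c.1 then - numr c.2 else numr c.2.
Fixpoint pev {R : comRingType} (l : seq (bool * seq nat)) (T : R) : R :=
  match l with [::] => 0 | c :: l' => zc c + T * pev l' T end.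

Lemma numr_morph (R S : comRingType) (f : {rmorphism R -> S}) ds :
  f (numr ds) = numr ds.
Proof. elim: ds => [|d ds IH] /=; first by rewrite rmorph0.
by rewrite rmorphD rmorphM !rmorph_nat IH. Qed.

Lemma pev_morph (R S : comRingType) (f : {rmorphism R -> S}) l (T : R) :
  f (pev l T) = pev l (f T).
Proof. elim: l => [|[b ds] l IH] /=; first by rewrite rmorph0.
rewrite rmorphD rmorphM IH /zc /=; case: b => /=; last by rewrite numr_morph.
by rewrite rmorphN numr_morph. Qed.

Definition aE {R : comRingType} (T : R) : R := pev [:: (false, [:: 840; 531; 146]); (false, [:: ]); (false, [:: 216; 609; 65; 1]); (false, [:: ]); (false, [:: 240; 634; 682; 2]); (false, [:: ]); (false, [:: 448; 928; 797; 2]); (false, [:: ]); (false, [:: 720; 342; 197; 1]); (false, [:: ]); (false, [:: 536; 713; 155])] T.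
Definition bE {R : comRingType} (T : R) : R := pev [:: (false, [:: 160; 524; 93; 2]); (false, [:: ]); (false, [:: 784; 382; 935; 10]); (false, [:: ]); (false, [:: 160; 876; 118; 18]); (false, [:: ]); (false, [:: 736; 308; 616; 8]); (false, [:: ]); (true, [:: 440; 813; 826; 2]); (false, [:: ]); (true, [:: 784; 806; 842; 1]); (false, [:: ]); (false, [:: 520; 27; 578]); (false, [:: ]); (false, [:: 864; 180; 198])] T.
Definition cE {R : comRingType} (T : R) : R := pev [:: (true, [:: 250; 881; 111]); (false, [:: ]); (false, [:: 744; 520; 689; 10]); (false, [:: ]); (false, [:: 400; 566; 852; 21]); (false, [:: ]); (true, [:: 440; 221; 420; 6]); (false, [:: ]); (true, [:: 480; 924; 403; 15]); (false, [:: ]); (false, [:: 752; 834; 637; 9]); (false, [:: ]); (true, [:: 520; 483; 237; 1]); (false, [:: ]); (true, [:: 80; 790; 591]); (false, [:: ]); (false, [:: 400; 438; 206]); (false, [:: ]); (true, [:: 776; 155; 14])] T.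
Definition w1 {R : comRingType} (T : R) : R := pev [:: (false, [:: 420; 4]); (false, [:: 448; 119]); (false, [:: 488; 35]); (false, [:: 664; 169]); (false, [:: 392; 91]); (false, [:: 800; 12]); (false, [:: 552; 87]); (false, [:: 656; 70]); (false, [:: 648; 27]); (false, [:: 432; 18])] T.
Definition w2 {R : comRingType} (T : R) : R := pev [:: (true, [:: 420; 4]); (false, [:: 448; 119]); (true, [:: 488; 35]); (false, [:: 664; 169]); (true, [:: 392; 91]); (false, [:: 800; 12]); (true, [:: 552; 87]); (false, [:: 656; 70]); (true, [:: 648; 27]); (false, [:: 432; 18])] T.
Definition w3 {R : comRingType} (T : R) : R := pev [:: (false, [:: 340; 119]); (false, [:: 328; 202]); (false, [:: 856; 533]); (false, [:: 376; 637]); (false, [:: 16; 758]); (false, [:: 240; 714]); (false, [:: 544; 428]); (false, [:: 824; 205]); (false, [:: 944; 82]); (false, [:: 432; 18])] T.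
Definition w4 {R : comRingType} (T : R) : R := pev [:: (true, [:: 340; 119]); (false, [:: 328; 202]); (true, [:: 856; 533]); (false, [:: 376; 637]); (true, [:: 16; 758]); (false, [:: 240; 714]); (true, [:: 544; 428]); (false, [:: 824; 205]); (true, [:: 944; 82]); (false, [:: 432; 18])] T.
Definition w5 {R : comRingType} (T : R) : R := pev [:: (false, [:: 500; 552]); (false, [:: 912; 765]); (false, [:: 400; 314; 2]); (false, [:: 40; 863; 2]); (false, [:: 160; 876; 2]); (false, [:: 456; 387; 2]); (false, [:: 200; 267; 1]); (false, [:: 160; 476]); (false, [:: 240; 138]); (false, [:: 432; 18])] T.
Definition w6 {R : comRingType} (T : R) : R := pev [:: (true, [:: 500; 552]); (false, [:: 912; 765]); (true, [:: 400; 314; 2]); (false, [:: 40; 863; 2]); (true, [:: 160; 876; 2]); (false, [:: 456; 387; 2]); (true, [:: 200; 267; 1]); (false, [:: 160; 476]); (true, [:: 240; 138]); (false, [:: 432; 18])] T.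

Lemma id_w1 {R : comRingType} (T : R) :
  256 * w1 T ^+ 2 = aE T * (2*T + 1)^+8 + 16 * bE T * (2*T + 1)^+4 + 256 * cE T.
Proof. rewrite /w1 /aE /bE /cE. cbn [pev zc numr fst snd]. ring. Qed.

Lemma id_w2 {R : comRingType} (T : R) :
  256 * w2 T ^+ 2 = aE T * (2*T + - 1)^+8 + 16 * bE T * (2*T + - 1)^+4 + 256 * cE T.
Proof. rewrite /w2 /aE /bE /cE. cbn [pev zc numr fst snd]. ring. Qed.

Lemma id_w3 {R : comRingType} (T : R) :
  256 * w3 T ^+ 2 = aE T * (2*T + 3)^+8 + 16 * bE T * (2*T + 3)^+4 + 256 * cE T.
Proof. rewrite /w3 /aE /bE /cE. cbn [pev zc numr fst snd]. ring. Qed.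

Lemma id_w4 {R : comRingType} (T : R) :
  256 * w4 T ^+ 2 = aE T * (2*T + - 3)^+8 + 16 * bE T * (2*T + - 3)^+4 + 256 * cE T.
Proof. rewrite /w4 /aE /bE /cE. cbn [pev zc numr fst snd]. ring. Qed.

Lemma id_w5 {R : comRingType} (T : R) :
  256 * w5 T ^+ 2 = aE T * (2*T + 5)^+8 + 16 * bE T * (2*T + 5)^+4 + 256 * cE T.
Proof. rewrite /w5 /aE /bE /cE. cbn [pev zc numr fst snd]. ring. Qed.

Lemma id_w6 {R : comRingType} (T : R) :
  256 * w6 T ^+ 2 = aE T * (2*T + - 5)^+8 + 16 * bE T * (2*T + - 5)^+4 + 256 * cE T.
Proof. rewrite /w6 /aE /bE /cE. cbn [pev zc numr fst snd]. ring. Qed.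


Lemma quartic_ell {F : fieldType} {a b c : F} : (2:F) != 0 -> a != 0 -> c != 0 ->
  b^+2 - 4*a*c != 0 -> elliptic_poly (quartic a b c).
Proof.
move=> h2 ha hc hd; rewrite /elliptic_poly; apply/andP; split.
  have -> : size (quartic a b c) = 5%N.
    rewrite /quartic -addrA size_addl ?size_scale ?size_polyXn //.
    apply: (leq_ltn_trans (size_add _ _)); rewrite gtn_max; apply/andP; split.
      by apply: (leq_ltn_trans (size_scale_leq _ _)); rewrite size_polyXn.
    by apply: (leq_ltn_trans (size_polyC_leq1 _)).
  by [].
rewrite unlock; apply/Bezout_coprimepP.
exists ((2*(b^+2-4*a*c))%:P + (4*a*b)%:P*'X^2, (-(b^+2-2*a*c))%:P*'X + (-(a*b))%:P*'X^3).
have -> : ((2*(b^+2-4*a*c))%:P + (4*a*b)%:P*'X^2, (-(b^+2-2*a*c))%:P*'X + (-(a*b))%:P*'X^3).1 * quartic a b c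
   + ((2*(b^+2-4*a*c))%:P + (4*a*b)%:P*'X^2, (-(b^+2-2*a*c))%:P*'X + (-(a*b))%:P*'X^3).2 * (quartic a b c)^`()
   = (2*c*(b^+2-4*a*c))%:P.
  rewrite /quartic /= !derivE /= -!mul_polyC.
  rewrite !(rmorphD, rmorphN, rmorphM, rmorphXn, rmorph_nat) /=.
  ring.
by rewrite polyC_eqp1 !mulf_neq0.
Qed.

Definition DE {R : comRingType} (T : R) : R := bE T ^+ 2 - 4 * aE T * cE T.

Lemma DE_morph (R S : comRingType) (f : {rmorphism R -> S}) (T : R) :
  f (DE T) = DE (f T).
Proof.
by rewrite /DE rmorphB !rmorphM ?rmorphXn rmorph_nat /aE /bE /cE !pev_morph.
Qed.

Lemma a0_pos : 0 < aE (0 : rat).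
Proof. rewrite /aE; cbn [pev zc numr fst snd]. lra. Qed.
Lemma a1_pos : 0 < aE (1 : rat).
Proof. rewrite /aE; cbn [pev zc numr fst snd]. lra. Qed.
Lemma c0_neg : cE (0 : rat) < 0.
Proof. rewrite /cE; cbn [pev zc numr fst snd]. lra. Qed.
Lemma c1_pos : 0 < cE (1 : rat).
Proof. rewrite /cE; cbn [pev zc numr fst snd]. lra. Qed.
Lemma D0_pos : 0 < DE (0 : rat).
Proof.
rewrite /DE; have := a0_pos; have := c0_neg; move: (aE 0) (cE 0) (bE (0:rat)) => a c b ha hc.
nra.
Qed.

Lemma pt {F : fieldType} {T z w m : F} : (2:F) != 0 -> 2 * z = 2 * T + m ->
  256 * w ^+ 2 = aE T * (2*T + m)^+8 + 16 * bE T * (2*T + m)^+4 + 256 * cE T ->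
  on_curve (quartic (aE T) (bE T) (cE T)) (z ^+ 2) w.
Proof.
move=> h2 hz H; rewrite /on_curve /quartic !(hornerD, hornerZ, hornerXn, hornerC).
rewrite -hz in H.
have h256 : (256 : F) != 0.
  have -> : (256 : F) = 2 ^+ 8 by ring.
  by rewrite expf_neq0.
apply: (mulfI h256); rewrite H; ring.
Qed.

Lemma pev_horner l (x : rat) : (pev l ('X : {poly rat})).[x] = pev l x.
Proof. by rewrite -horner_evalE pev_morph; congr pev; exact: hornerX. Qed.

Lemma DE_horner (x : rat) : (DE ('X : {poly rat})).[x] = DE x.
Proof. by rewrite -horner_evalE DE_morph; congr DE; exact: hornerX. Qed.

Lemma pev_tofrac l : (FracField.tofrac (pev l ('X : {poly rat})) : Qt) = pev l tvar.
Proof. by rewrite pev_morph. Qed.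

Lemma DE_tofrac : (FracField.tofrac (DE ('X : {poly rat})) : Qt) = DE tvar.
Proof. by rewrite DE_morph. Qed.

Lemma nz_tofrac (p : {poly rat}) : p.[0] != 0 -> (FracField.tofrac p : Qt) != 0.
Proof. move=> h; rewrite tofrac_eq0; apply: contraNneq h => ->; by rewrite horner0. Qed.

Lemma two_Qt : (2 : Qt) != 0.
Proof.
have -> : (2 : Qt) = FracField.tofrac (2 : {poly rat}) by rewrite rmorph_nat.
by rewrite tofrac_eq0 -polyC_natr polyC_eq0.
Qed.

Lemma ratr_Qt q : (ratr q : Qt) = FracField.tofrac (q%:P).
Proof. by rewrite -(fmorph_eq_rat ((@FracField.tofrac _) \o (@polyC rat))). Qed.

Lemma shq (q r : rat) (x : Qt) : 2 * q = r -> x = FracField.tofrac (r%:P) ->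
  2 * (tvar + ratr q) = 2 * tvar + x.
Proof. move=> h ->; rewrite mulrDr ratr_Qt -h !rmorphM !rmorph_nat. by []. Qed.

Lemma nroot {p : {poly rat}} : p != 0 -> exists n : nat, p.[n%:R] != 0.
Proof.
move=> hp; case: (boolP (all (root p) [seq i%:R | i <- iota 0 (size p)])).
  move=> hall.
  have hu : uniq [seq (i%:R : rat) | i <- iota 0 (size p)].
    rewrite map_inj_uniq ?iota_uniq // => i j h.
    by apply/eqP; rewrite -(eqr_nat rat); apply/eqP.
  by have := max_poly_roots hp hall hu; rewrite size_map size_iota ltnn.
by move=> /allPn [x /mapP [n _ ->] hn]; exists n.
Qed.

Lemma nz_of0 {l} : pev l (0:rat) != 0 -> pev l ('X : {poly rat}) != 0.
Proof. move=> h; apply: contraNneq h => e; by rewrite -pev_horner e horner0. Qed.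

Lemma DE_nz0 : DE ('X : {poly rat}) != 0.
Proof.
apply: contraTneq D0_pos => e; by rewrite -DE_horner e horner0 ltxx.
Qed.

Lemma noprop {a0 a1 c0 c1 x y : rat} : 0 < a0 -> 0 < a1 -> c0 < 0 -> 0 < c1 ->
  x * c0 - y * a0 = 0 -> x * c1 - y * a1 = 0 -> x = 0.
Proof.
move=> ha0 ha1 hc0 hc1 e0 e1.
have : x * (c0 * a1 - c1 * a0) = 0.
  have -> : x * (c0 * a1 - c1 * a0) = a1 * (x * c0 - y * a0) - a0 * (x * c1 - y * a1) by ring.
  by rewrite e0 e1 !mulr0 subr0.
move/eqP; rewrite mulf_eq0 => /orP[/eqP //|/eqP h].
nra.
Qed.

Theorem theorem1 :
  (exists a b c : Qt,
     elliptic_poly (quartic a b c) /\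
     forall i : rat, i \in [:: 1/2; -(1/2); 3/2; -(3/2); 5/2; -(5/2)] ->
       exists y : Qt, on_curve (quartic a b c) ((tvar + ratr i) ^+ 2) y)
  /\
  (forall s : seq (rat * rat * rat),
     exists a b c : rat,
       (forall l : rat, l != 0 ->
          (l ^+ 2 * a, l ^+ 2 * b, l ^+ 2 * c) \notin s) /\
       elliptic_poly (quartic a b c) /\
       has_consec_squares (quartic a b c) 6).
Proof.
split.
  exists (aE tvar), (bE tvar), (cE tvar); split.
    apply: quartic_ell two_Qt _ _ _.
    - rewrite /aE -pev_tofrac; apply: nz_tofrac; rewrite pev_horner.
      exact: lt0r_neq0 a0_pos.
    - rewrite /cE -pev_tofrac; apply: nz_tofrac; rewrite pev_horner.
      exact: ltr0_neq0 c0_neg.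
    - change (DE tvar != 0); rewrite -DE_tofrac; apply: nz_tofrac; rewrite DE_horner.
      exact: lt0r_neq0 D0_pos.
  move=> i; rewrite !in_cons in_nil orbF.
  case/orP=> [/eqP->|]; first by exists (w1 tvar); apply: (pt two_Qt _ (id_w1 tvar));
    apply: (shq _ 1); [by field | by rewrite !rmorph1].
  case/orP=> [/eqP->|]; first by exists (w2 tvar); apply: (pt two_Qt _ (id_w2 tvar));
    apply: (shq _ (- 1)); [by field | by rewrite !rmorphN !rmorph1].
  case/orP=> [/eqP->|]; first by exists (w3 tvar); apply: (pt two_Qt _ (id_w3 tvar));
    apply: (shq _ 3); [by field | by rewrite !rmorph_nat].
  case/orP=> [/eqP->|]; first by exists (w4 tvar); apply: (pt two_Qt _ (id_w4 tvar));
    apply: (shq _ (- 3)); [by field | by rewrite !rmorphN !rmorph_nat].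
  case/orP=> [/eqP->|/eqP->]; first by exists (w5 tvar); apply: (pt two_Qt _ (id_w5 tvar));
    apply: (shq _ 5); [by field | by rewrite !rmorph_nat].
  by exists (w6 tvar); apply: (pt two_Qt _ (id_w6 tvar));
    apply: (shq _ (- 5)); [by field | by rewrite !rmorphN !rmorph_nat].
move=> s.
pose pa := aE ('X : {poly rat}); pose pb := bE ('X : {poly rat});
pose pc := cE ('X : {poly rat}); pose pD := DE ('X : {poly rat}).
pose G := fun e : rat * rat * rat =>
  if e.1.1 == 0 then 1 else e.1.1%:P * pc - e.2%:P * pa.
have hGx : forall e x, e.1.1 != 0 -> (G e).[x] = e.1.1 * cE x - e.2 * aE x.
  move=> e x he; rewrite /G (negbTE he) hornerD hornerN !hornerCM.
  by rewrite /pc /pa /cE /aE !pev_horner.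
have hG : forall e, G e != 0.
  move=> e; case: (eqVneq e.1.1 0) => [he|he].
    by rewrite /G he eqxx oner_neq0.
  apply/eqP => h0.
  have e0 := hGx e 0 he; have e1 := hGx e 1 he; rewrite h0 !horner0 in e0 e1.
  by move: he; rewrite (noprop a0_pos a1_pos c0_neg c1_pos (esym e0) (esym e1)) eqxx.
have hF : pa * pc * pD * \prod_(e <- s) G e != 0.
  rewrite !mulf_neq0 //.
  - exact: nz_of0 (lt0r_neq0 a0_pos).
  - exact: nz_of0 (ltr0_neq0 c0_neg).
  - exact: DE_nz0.
  - by rewrite prodf_seq_neq0; apply/allP => e _; rewrite hG.
have [n hn] := nroot hF.
move: hn; rewrite !hornerM !mulf_eq0 !negb_or horner_prod prodf_seq_neq0.
move=> /andP[/andP[/andP[ha hc] hd] hp].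
move: ha hc hd; rewrite /pa /pc /pD pev_horner pev_horner DE_horner => ha hc hd.
set t0 : rat := n%:R in ha hc hd hp.
exists (aE t0), (bE t0), (cE t0); split; [|split].
- move=> l hl; apply/negP => hin.
  have hl2 : l ^+ 2 * aE t0 != 0 by apply: mulf_neq0; [exact: expf_neq0 hl | exact: ha].
  have := allP hp _ hin; rewrite implyTb.
  rewrite (hGx (l ^+ 2 * aE t0, l ^+ 2 * bE t0, l ^+ 2 * cE t0) t0 hl2) => /negP; apply.
  apply/eqP; move: (aE t0) (bE t0) (cE t0) => A B C /=; ring.
- exact: (quartic_ell (isT : (2:rat) != 0) ha hc hd).
- exists (t0 - 7/2) => i /andP[h1 h6].
  case: i h1 h6 => [|[|[|[|[|[|[|i]]]]]]] h1 h6.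
  + by move: h1; rewrite ltnn.
  + by exists (w6 t0); apply: (pt _ _ (id_w6 t0)); [exact: (isT : (2:rat) != 0) | field].
  + by exists (w4 t0); apply: (pt _ _ (id_w4 t0)); [exact: (isT : (2:rat) != 0) | field].
  + by exists (w2 t0); apply: (pt _ _ (id_w2 t0)); [exact: (isT : (2:rat) != 0) | field].
  + by exists (w1 t0); apply: (pt _ _ (id_w1 t0)); [exact: (isT : (2:rat) != 0) | field].
  + by exists (w3 t0); apply: (pt _ _ (id_w3 t0)); [exact: (isT : (2:rat) != 0) | field].
  + by exists (w5 t0); apply: (pt _ _ (id_w5 t0)); [exact: (isT : (2:rat) != 0) | field].
  + by move: h6; rewrite !ltnS ltn0.
Qed.
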